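(* Let $(\Omega,\mathcal{F},P)$ be a probability space, $\mathcal{X}$ a measurable space, $X:\Omega\to\mathcal{X}$ a measurable map (an act), $u:\mathcal{X}\to\mathbb{R}$ a measurable function, and $\beta\in(-1,\infty)$. For $v\in\mathbb{R}$ define $k_v:\mathcal{X}\to\mathbb{R}$ by $k_v(x)=\dfrac{u(x)+\beta v}{1+\beta}$ if $u(x)\ge v$ and $k_v(x)=u(x)$ if $u(x)<v$. Suppose $\mathbb{E}[u(X)]$ exists and is finite. Then for $v\in\mathbb{R}$ the following are equivalent: (1) $v=\mathbb{E}[k_v(X)]$; (2) $\mathbb{E}[(u(X)-v)^+]=(1+\beta)\,\mathbb{E}[(v-u(X))^+]$. In particular, such a $v$ exists and is unique.
   Context: $s^+=\max\{s,0\}$. The unique solution is denoted $\mathbb{E}_\beta[u(X)]$ (the expectile, or ''expectiled utility''). *)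

(* Defs.v *)
From HB Require Import structures.
From mathcomp Require Import all_boot all_order all_algebra.
From mathcomp Require Import all_classical all_reals all_analysis.
Set Implicit Arguments. Unset Strict Implicit. Unset Printing Implicit Defensive.
Import Order.TTheory GRing.Theory Num.Theory.
Local Open Scope ring_scope.

Definition posp {R : realType} (s : R) : R := Num.max s 0.

Definition kfun {R : realType} {Tx : Type} (u : Tx -> R) (beta v : R) (x : Tx) : R :=
  if v <= u x then (u x + beta * v) / (1 + beta) else u x.

(* Main.v *)
Require Import Defs.
From HB Require Import structures.
From mathcomp Require Import all_boot all_order all_algebra.
From mathcomp Require Import all_classical all_reals all_analysis.
From mathcomp Require Import ring lra measurable_realfun.
Import Order.TTheory GRing.Theory Num.Theory.
Import numFieldNormedType.Exports.
Local Open Scope ring_scope.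

Section Helpers.
Variable R : realType.

Lemma posp_cases (t : R) : (0 <= t /\ posp t = t) \/ (t < 0 /\ posp t = 0).
Proof.
rewrite /posp; have [h|h] := leP 0 t.
  by left; split => //; rewrite max_l.
by right; split => //; rewrite max_r // ltW.
Qed.

Lemma mposp : measurable_fun setT (@posp R).
Proof.
rewrite /posp.
exact: (measurable_maxr (f := id) (g := cst 0)).
Qed.

Lemma lip_cont (f : R -> R) (C : R) : 0 < C ->
  (forall x y, x <= y -> `|f y - f x| <= C * (y - x)) -> continuous f.
Proof.
move=> C0 H x; apply/cvgrPdist_lt => e e0.
near=> y.
have H' : `|f x - f y| <= C * `|x - y|.
  have [xy|yx] := leP x y.
    rewrite distrC (distrC x) (ger0_norm (x := y - x)) ?subr_ge0 //; exact: H.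
  rewrite (gtr0_norm (x := x - y)) ?subr_gt0 //; exact: H (ltW yx).
apply: (le_lt_trans H'); rewrite -ltr_pdivlMl //.
near: y.
apply/nbhs_ballP; exists (C^-1 * e) => /=; first by rewrite mulr_gt0 ?invr_gt0.
by move=> y; rewrite /ball /=.
Unshelve. all: by end_near.
Qed.

End Helpers.
Arguments posp_cases {R}.
Section Prob.
Variables (R : realType) (d : measure_display) (Omega : measurableType d)
  (P : probability Omega R) (Y : Omega -> R).
Hypotheses (mY : measurable_fun setT Y) (iY : P.-integrable setT (EFin \o Y)).

Lemma icst v : P.-integrable setT (EFin \o (fun _ : Omega => v)).
Proof. exact: finite_measure_integrable_cst. Qed.

Lemma Rcst v : Rintegral P setT (fun _ => v) = v.
Proof. rewrite Rintegral_cst // -[RHS]mulr1; congr (_ * _); exact: (congr1 fine (probability_setT P)). Qed.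

Lemma iYv v : P.-integrable setT (EFin \o (fun w => Y w - v)).
Proof.
exact: eq_integrable (integrableB _ iY (icst v)).
Qed.

Lemma ipos v : P.-integrable setT (EFin \o (fun w => posp (Y w - v))).
Proof.
apply: le_integrable (iYv v) => //.
  apply/measurable_EFinP; apply: measurableT_comp (@mposp R) _.
  exact: measurable_funB mY (measurable_cst _).
move=> x _ /=; rewrite lee_fin.
case: (posp_cases (Y x - v)) => [[h ->]|[h ->]] //.
by rewrite normr0 normr_ge0.
Qed.

Lemma RintE f : P.-integrable setT (EFin \o f) ->
  (\int[P]_w (f w)%:E = (Rintegral P setT f)%:E)%E.
Proof. by move=> h; rewrite /Rintegral fineK // integrable_fin_num. Qed.

Definition A v := Rintegral P setT (fun w => posp (Y w - v)).
Definition m := Rintegral P setT Y.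

Lemma Amono v w : v <= w -> 0 <= A v - A w <= w - v.
Proof.
move=> vw; apply/andP; split.
  rewrite subr_ge0; apply: le_Rintegral => //; try exact: ipos.
  move=> x _.
  case: (posp_cases (Y x - v)) => [[h1 ->]|[h1 ->]];
  case: (posp_cases (Y x - w)) => [[h2 ->]|[h2 ->]]; lra.
rewrite lerBlDl.
have -> : A w + (w - v) = Rintegral P setT (fun x => posp (Y x - w) + (w - v)).
  by rewrite RintegralD // ?Rcst //; [exact: ipos | exact: icst].
apply: le_Rintegral => //; first exact: ipos.
  exact: eq_integrable (integrableD _ (ipos w) (icst (w - v))).
move=> x _.
case: (posp_cases (Y x - v)) => [[h1 ->]|[h1 ->]];
case: (posp_cases (Y x - w)) => [[h2 ->]|[h2 ->]]; lra.
Qed.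

Lemma Bform v : Rintegral P setT (fun w => posp (v - Y w)) = A v - (m - v).
Proof.
transitivity (Rintegral P setT (fun w => posp (Y w - v) - (Y w - v))).
  apply: eq_Rintegral => x _.
  case: (posp_cases (Y x - v)) => [[h1 ->]|[h1 ->]];
  case: (posp_cases (v - Y x)) => [[h2 ->]|[h2 ->]]; lra.
rewrite RintegralB //; [|exact: ipos|exact: iYv].
rewrite RintegralB //; [|exact: icst].
by rewrite Rcst.
Qed.

Lemma iB v : P.-integrable setT (EFin \o (fun w => posp (v - Y w))).
Proof.
apply: eq_integrable (integrableB _ (ipos v) (iYv v)) => // x _.
rewrite /= -EFinB; congr EFin.
case: (posp_cases (Y x - v)) => [[h1 ->]|[h1 ->]];
case: (posp_cases (v - Y x)) => [[h2 ->]|[h2 ->]]; lra.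
Qed.

Lemma Kform v beta : -1 < beta ->
  (\int[P]_w (if v <= Y w then (Y w + beta * v) / (1 + beta) else Y w)%:E
   = (m + (1 / (1 + beta) - 1) * A v)%:E)%E.
Proof.
move=> hb.
have nz : 1 + beta != 0 by rewrite gt_eqF //; lra.
rewrite (eq_integral (fun w => (Y w + (1 / (1 + beta) - 1) * posp (Y w - v))%:E)).
  rewrite RintE; last first.
    exact: eq_integrable (integrableD _ iY (integrableZl _ (1 / (1 + beta) - 1) (ipos v))).
  rewrite RintegralD //.
  all: try exact: iY.
  all: try exact: eq_integrable (integrableZl _ (1 / (1 + beta) - 1) (ipos v)).
  by rewrite RintegralZl //; exact: ipos.
move=> x _; congr EFin.
case: ifP => h.
  case: (posp_cases (Y x - v)) => [[h1 ->]|[h1 ->]]; last by lra.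
  by field.
case: (posp_cases (Y x - v)) => [[h1 ->]|[h1 ->]]; last by rewrite mulr0 addr0.
by move/negbT: h; rewrite -ltNge; lra.
Qed.


Definition G beta v := - beta * A v + (1 + beta) * (m - v).

Lemma Gdiff beta v w : G beta v - G beta w = - beta * (A v - A w) + (1 + beta) * (w - v).
Proof. rewrite /G; ring. Qed.

Lemma Gbounds beta v w : -1 < beta -> v <= w ->
  (if 0 <= beta then 1 else 1 + beta) * (w - v) <= G beta v - G beta w
  <= (`|beta| + 2 + beta) * (w - v).
Proof.
move=> hb vw; rewrite Gdiff.
have /andP[a0 a1] := Amono v w vw.
move: (A v - A w) a0 a1 => a a0 a1.
have wv0 : 0 <= w - v by rewrite subr_ge0.
case: ifP => hb0.
  rewrite ger0_norm //.
  have p1 : 0 <= beta * (w - v - a) by apply: mulr_ge0; lra.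
  have p2 : 0 <= beta * a by apply: mulr_ge0.
  have p3 : 0 <= beta * (w - v) by apply: mulr_ge0.
  apply/andP; split; nra.
move/negbT: hb0; rewrite -ltNge => hb0.
rewrite ltr0_norm //.
have p2 : 0 <= - beta * a by apply: mulr_ge0; lra.
have p3 : 0 <= - beta * (w - v - a) by apply: mulr_ge0; lra.
have p4 : 0 <= (1 + beta) * (w - v) by apply: mulr_ge0; lra.
apply/andP; split; nra.
Qed.

Lemma Gcont beta : -1 < beta -> continuous (G beta).
Proof.
move=> hb; apply: (@lip_cont _ _ (`|beta| + 2 + beta)).
  have := normr_ge0 beta.
  case: (leP 0 beta) => h; [rewrite ger0_norm // | rewrite ltr0_norm //]; lra.
move=> x y xy.
have /andP[h1 h2] := Gbounds beta x y hb xy.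
have hK : 0 <= `|beta| + 2 + beta.
  case: (leP 0 beta) => h; [rewrite ger0_norm // | rewrite ltr0_norm //]; lra.
have c0 : 0 <= (if 0 <= beta then 1 else 1 + beta) by case: ifP => _; lra.
have yx : 0 <= y - x by rewrite subr_ge0.
have : 0 <= (if 0 <= beta then 1 else 1 + beta) * (y - x) by apply: mulr_ge0.
move=> h3.
rewrite distrC ger0_norm; lra.
Qed.

Lemma Gex beta : -1 < beta -> exists! v, G beta v = 0.
Proof.
move=> hb.
set c := (if 0 <= beta then 1 else 1 + beta).
have c0 : 0 < c by rewrite /c; case: ifP => _; lra.
have uniq v y : G beta v = 0 -> G beta y = 0 -> v <= y -> v = y.
  move=> gv gy vy; have /andP[h1 _] := Gbounds beta v y hb vy.
  rewrite -/c gv gy subrr in h1.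
  have : 0 <= y - v by rewrite subr_ge0.
  move=> h2; nra.
set g0 := G beta 0.
set a0 := - (`|g0| / c).
set b0 := `|g0| / c.
have hcb : c * b0 = `|g0| by rewrite /b0 mulrC divfK // gt_eqF.
have b00 : 0 <= b0 by rewrite /b0 divr_ge0 // ltW.
have ga0 : 0 <= G beta a0.
  have a00 : a0 <= 0 by rewrite /a0 oppr_le0.
  have /andP[h1 _] := Gbounds beta a0 0 hb a00.
  have e : 0 - a0 = b0 by rewrite /a0 sub0r opprK.
  rewrite -/c -/g0 e hcb in h1.
  have := ler_norm (- g0); rewrite normrN; lra.
have gb0 : G beta b0 <= 0.
  have /andP[h1 _] := Gbounds beta 0 b0 hb b00.
  rewrite -/c -/g0 subr0 hcb in h1.
  have := ler_norm g0; lra.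
have hab : a0 <= b0 by rewrite /a0 -/b0; lra.
have hmm : Num.min (G beta a0) (G beta b0) <= 0 <= Num.max (G beta a0) (G beta b0).
  by rewrite ge_min le_max gb0 ga0 orbT.
have [v _ gv] := IVT hab (continuous_subspaceT (Gcont beta hb)) hmm.
exists v; split => // y gy.
have [vy|yv] := leP v y; first exact: uniq.
by apply/esym/uniq => //; apply: ltW.
Qed.

End Prob.
Local Open Scope ereal_scope.
Theorem proposition1 (R : realType) (d : measure_display) (Omega : measurableType d)
  (P : probability Omega R) (d' : measure_display) (Xs : measurableType d')
  (X : Omega -> Xs) (u : Xs -> R) (beta : R) :
  measurable_fun setT X -> measurable_fun setT u -> (-1 < beta)%R ->
  P.-integrable setT (fun w => (u (X w))%:E) ->
  (forall v : R,
     v%:E = \int[P]_w (kfun u beta v (X w))%:E <->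
     \int[P]_w (posp (u (X w) - v))%:E
       = (1 + beta)%:E * \int[P]_w (posp (v - u (X w)))%:E)
  /\ (exists! v : R, v%:E = \int[P]_w (kfun u beta v (X w))%:E)
  /\ (exists! v : R, \int[P]_w (posp (u (X w) - v))%:E
                       = (1 + beta)%:E * \int[P]_w (posp (v - u (X w)))%:E).
Proof.
move=> mX mu hb iY0.
pose Y := fun w => u (X w).
have mY : measurable_fun setT Y by exact: measurableT_comp mu mX.
have iY : P.-integrable setT (EFin \o Y) by exact: iY0.
have nz : (1 + beta != 0)%R by rewrite gt_eqF //; lra.
have eq1 v : v%:E = \int[P]_w (kfun u beta v (X w))%:E <-> G _ _ _ P Y beta v = 0%R.
  rewrite /kfun (Kform _ _ _ _ _ mY iY v beta hb) /G.
  set a := A _ _ _ P Y v; set mm := m _ _ _ P Y.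
  split => [[h] | h].
    by rewrite h; field.
  have h2 : ((1 + beta) * v = (1 + beta) * mm - beta * a)%R.
    rewrite mulrBr in h; nra.
  have h3 : v = (mm + (1 / (1 + beta) - 1) * a)%R.
    by apply: (mulfI nz); rewrite h2; field.
  by rewrite {1}h3.
have eq2 v : \int[P]_w (posp (u (X w) - v))%:E
       = (1 + beta)%:E * \int[P]_w (posp (v - u (X w)))%:E <-> G _ _ _ P Y beta v = 0%R.
  rewrite (RintE _ _ _ _ _ (ipos _ _ _ _ _ mY iY v)) (RintE _ _ _ _ _ (iB _ _ _ _ _ mY iY v)) (Bform _ _ _ _ _ mY iY v) -EFinM /G.
  set a := A _ _ _ P Y v; set mm := m _ _ _ P Y.
  split => [[h] | h].
    change (a = (1 + beta) * (a - (mm - v)))%R in h.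
    nra.
  change (a%:E = ((1 + beta) * (a - (mm - v)))%:E).
  have h4 : (a = (1 + beta) * (a - (mm - v)))%R by nra.
  by rewrite {1}h4.
have [v [Gv Gu]] := Gex _ _ _ _ _ mY iY _ hb.
split; first by move=> v'; rewrite eq1 eq2.
split.
  exists v; split; first exact/eq1.
  by move=> y /eq1; exact: Gu.
exists v; split; first exact/eq2.
by move=> y /eq2; exact: Gu.
Qed.
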